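(* Let $R$ be an integral domain, $M$ a maximal ideal of $R[X]$, and $P = M\cap R$. Then $M$ is power stable if and only if $P^{(t)} = P^t$ for all $t\geq 1$, i.e. if and only if $P^t$ is $P$-primary for every $t\geq 1$.
   Context: An ideal $I$ of the polynomial ring $R[X]$ over an integral domain $R$ is called power stable if $I^t\cap R = (I\cap R)^t$ for all integers $t\geq 1$. For a prime ideal $P$ of $R$, $P^{(t)} = P^tR_P\cap R$ is the $t$-th symbolic power. *)

(* Defs.v *)
From HB Require Import structures.
From mathcomp Require Import all_boot all_order all_algebra.
Set Implicit Arguments. Unset Strict Implicit. Unset Printing Implicit Defensive.
Import GRing.Theory.
Local Open Scope ring_scope.

Definition is_ideal (A : comNzRingType) (I : A -> Prop) : Prop :=
  [/\ I 0, (forall x y, I x -> I y -> I (x + y)) & (forall r x, I x -> I (r * x))].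

Definition is_maximal_ideal (A : comNzRingType) (I : A -> Prop) : Prop :=
  [/\ is_ideal I, ~ I 1 &
      forall J : A -> Prop, is_ideal J -> (forall x, I x -> J x) ->
        (forall x, J x <-> I x) \/ J 1].

Definition ideal_mul (A : comNzRingType) (I J : A -> Prop) : A -> Prop :=
  fun x => exists s : seq (A * A),
    (forall p, p \in s -> I p.1 /\ J p.2) /\ x = \sum_(p <- s) p.1 * p.2.

Fixpoint ideal_pow (A : comNzRingType) (I : A -> Prop) (t : nat) : A -> Prop :=
  match t with
  | 0%N => fun _ => True
  | t'.+1 => ideal_mul (ideal_pow I t') I
  end.

(* I ∩ R for an ideal I of R[X] (R embedded via constants). *)
Definition contraction (R : idomainType) (I : {poly R} -> Prop) : R -> Prop :=
  fun r => I r%:P.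

(* Symbolic power P^(t) = P^t R_P ∩ R; over a domain, x/1 ∈ P^t R_P
   iff s * x ∈ P^t for some s ∉ P. *)
Definition symbolic_pow (R : idomainType) (P : R -> Prop) (t : nat) : R -> Prop :=
  fun x => exists s, ~ P s /\ ideal_pow P t (s * x).

Definition power_stable (R : idomainType) (I : {poly R} -> Prop) : Prop :=
  forall t : nat, (1 <= t)%N ->
    forall r : R, contraction (ideal_pow I t) r <-> ideal_pow (contraction I) t r.

(* Main.v *)
Require Import Defs.
From HB Require Import structures.
From mathcomp Require Import all_boot all_order all_algebra.
From Stdlib Require Import Classical.
From mathcomp Require Import ring.
Set Implicit Arguments. Unset Strict Implicit. Unset Printing Implicit Defensive.
Import GRing.Theory.
Local Open Scope ring_scope.

Lemma ideal_sum (A : comNzRingType) (I : A -> Prop) (T : eqType) (s : seq T) (F : T -> A) :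
  is_ideal I -> (forall x, x \in s -> I (F x)) -> I (\sum_(x <- s) F x).
Proof.
move=> [I0 ID IM] H; rewrite big_seq_cond.
apply: (big_ind I) => //= x /andP[xs _]; exact: H.
Qed.

Lemma ideal_mul_ideal (A : comNzRingType) (I J : A -> Prop) :
  is_ideal I -> is_ideal (ideal_mul I J).
Proof.
move=> [I0 ID IM]; split.
- by exists [::]; rewrite big_nil.
- move=> x y [s [Hs ->]] [s' [Hs' ->]]; exists (s ++ s'); split; last by rewrite big_cat.
  by move=> p; rewrite mem_cat => /orP[/Hs|/Hs'].
- move=> r x [s [Hs ->]]; exists [seq (r * p.1, p.2) | p <- s]; split.
  + move=> p /mapP[q /Hs [h1 h2] ->] /=; split => //; exact: IM.
  + rewrite big_map big_distrr /=; apply: eq_bigr => p _; by rewrite mulrA.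
Qed.

Lemma ideal_True (A : comNzRingType) : is_ideal (fun _ : A => True).
Proof. by split. Qed.

Lemma ideal_pow_ideal (A : comNzRingType) (I : A -> Prop) t :
  is_ideal (ideal_pow I t).
Proof. elim: t => [|t IH]; [by split | exact: ideal_mul_ideal]. Qed.

Lemma ideal_pow_mul (A : comNzRingType) (I : A -> Prop) t a b :
  ideal_pow I t a -> I b -> ideal_pow I t.+1 (a * b).
Proof.
move=> Ha Ib; exists [:: (a, b)]; split; last by rewrite big_seq1.
by move=> p; rewrite inE => /eqP -> /=.
Qed.

Lemma ideal_pow1 (A : comNzRingType) (I : A -> Prop) x :
  is_ideal I -> (ideal_pow I 1 x <-> I x).
Proof.
move=> HI; split.
- move=> [s [Hs ->]]; apply: ideal_sum => // p /Hs [_ h].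
  by case: HI => _ _ IM; apply: IM.
- move=> Ix; rewrite -[x]mul1r; exact: ideal_pow_mul.
Qed.

Lemma ideal_pow_expr (A : comNzRingType) (I : A -> Prop) t m :
  I m -> ideal_pow I t (m ^+ t).
Proof.
move=> Im; elim: t => [|t IH] //=; rewrite exprSr; exact: ideal_pow_mul.
Qed.

Lemma ideal_opp (A : comNzRingType) (I : A -> Prop) x : is_ideal I -> I x -> I (- x).
Proof. by move=> [_ _ IM] /(IM (-1)); rewrite mulN1r. Qed.

Lemma ideal_sub (A : comNzRingType) (I : A -> Prop) x y : is_ideal I -> I x -> I y -> I (x - y).
Proof. move=> HI Ix Iy; case: (HI) => _ ID _; apply: ID => //; exact: ideal_opp. Qed.

Lemma ideal_mulr (A : comNzRingType) (I : A -> Prop) x r : is_ideal I -> I x -> I (x * r).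
Proof. by move=> [_ _ IM] Ix; rewrite mulrC; apply: IM. Qed.

Lemma max_prime (A : comNzRingType) (M : A -> Prop) a b :
  is_maximal_ideal M -> M (a * b) -> ~ M a -> M b.
Proof.
move=> [HI N1 Hmax] Mab Na.
pose J := fun x => exists m u, M m /\ x = m + a * u.
have HJ : is_ideal J.
  case: HI => M0 MD MM; split.
  - by exists 0, 0; rewrite mulr0 addr0.
  - move=> x y [m [u [Mm ->]]] [m' [u' [Mm' ->]]]; exists (m + m'), (u + u'); split; first exact: MD.
    by rewrite mulrDr addrACA.
  - move=> r x [m [u [Mm ->]]]; exists (r * m), (r * u); split; first exact: MM.
    by rewrite mulrDr mulrCA.
have MJ : forall x, M x -> J x by move=> x Mx; exists x, 0; rewrite mulr0 addr0.
case: (Hmax J HJ MJ) => [HJM|[m [u [Mm E]]]].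
  by exfalso; apply: Na; apply/HJM; exists 0, 1; case: HI => M0 _ _; rewrite mulr1 add0r.
have -> : b = b * m + (a * b) * u by rewrite [a * b]mulrC -mulrA -mulrDr -E mulr1.
case: (HI) => M0 MD MM; apply: MD; [exact: MM | exact: ideal_mulr].
Qed.

Lemma max_unit (A : comNzRingType) (M : A -> Prop) s :
  is_maximal_ideal M -> ~ M s -> exists m u, M m /\ 1 = m + s * u.
Proof.
move=> [HI N1 Hmax] Ns.
pose J := fun x => exists m u, M m /\ x = m + s * u.
have HJ : is_ideal J.
  case: HI => M0 MD MM; split.
  - by exists 0, 0; rewrite mulr0 addr0.
  - move=> x y [m [u [Mm ->]]] [m' [u' [Mm' ->]]]; exists (m + m'), (u + u'); split; first exact: MD.
    by rewrite mulrDr addrACA.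
  - move=> r x [m [u [Mm ->]]]; exists (r * m), (r * u); split; first exact: MM.
    by rewrite mulrDr mulrCA.
have MJ : forall x, M x -> J x by move=> x Mx; exists x, 0; rewrite mulr0 addr0.
case: (Hmax J HJ MJ) => [HJM|//].
by exfalso; apply: Ns; apply/HJM; exists 0, 1; case: HI => M0 _ _; rewrite mulr1 add0r.
Qed.

Lemma pow_primary (A : comNzRingType) (M : A -> Prop) s y t :
  is_maximal_ideal M -> ~ M s -> ideal_pow M t (s * y) -> ideal_pow M t y.
Proof.
move=> HM Ns H; have [m [u [Mm E]]] := max_unit HM Ns.
have geo : forall k, exists w, 1 - m ^+ k = s * w.
  elim=> [|k [w Hw]]; first by exists 0; rewrite expr0 subrr mulr0.
  have su : s * u = 1 - m by rewrite E addrAC subrr add0r.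
  exists (w + m ^+ k * u); rewrite mulrDr -Hw mulrCA su exprSr.
  ring.
have [w Hw] := geo t.
have -> : y = y * m ^+ t + (s * y) * w by rewrite [s * y]mulrC -mulrA -Hw; ring.
have HI := ideal_pow_ideal M t; case: (HI) => _ ID _.
apply: ID; last exact: ideal_mulr.
case: HI => _ _ IM; apply: IM; apply: ideal_pow_expr.
by case: HM.
Qed.

Lemma SP_ideal (R : idomainType) (P : R -> Prop) k :
  (forall a b, ~ P a -> ~ P b -> ~ P (a * b)) -> ~ P 1 ->
  is_ideal (symbolic_pow P k).
Proof.
move=> Hpr H1; have [I0 ID IM] := ideal_pow_ideal P k; split.
- by exists 1; split => //; rewrite mulr0.
- move=> x y [s [Ns Hx]] [s' [Ns' Hy]]; exists (s * s'); split; first exact: Hpr.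
  have -> : s * s' * (x + y) = s' * (s * x) + s * (s' * y) by ring.
  by apply: ID; apply: IM.
- move=> r x [s [Ns Hx]]; exists s; split => //; rewrite mulrCA; exact: IM.
Qed.

Lemma SP_sat (R : idomainType) (P : R -> Prop) k a y :
  (forall a b, ~ P a -> ~ P b -> ~ P (a * b)) ->
  ~ P a -> symbolic_pow P k (a * y) -> symbolic_pow P k y.
Proof.
move=> Hpr Na [s [Ns H]]; exists (s * a); split; first exact: Hpr.
by rewrite -mulrA.
Qed.

Lemma SP_of_P (R : idomainType) (P : R -> Prop) x :
  is_ideal P -> ~ P 1 -> P x -> symbolic_pow P 1 x.
Proof. by move=> HI H1 Px; exists 1; split => //; rewrite mul1r; apply/ideal_pow1. Qed.

Lemma SP_mul (R : idomainType) (P : R -> Prop) k a b :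
  is_ideal P -> (forall a b, ~ P a -> ~ P b -> ~ P (a * b)) ->
  symbolic_pow P k a -> symbolic_pow P 1 b -> symbolic_pow P k.+1 (a * b).
Proof.
move=> HI Hpr [s [Ns Ha]] [s' [Ns' /(ideal_pow1 _ HI) Hb]].
exists (s * s'); split; first exact: Hpr.
have -> : s * s' * (a * b) = (s * a) * (s' * b) by ring.
exact: ideal_pow_mul.
Qed.

Lemma SP0 (R : idomainType) (P : R -> Prop) x : ~ P 1 -> symbolic_pow P 0 x.
Proof. by move=> H1; exists 1. Qed.

Lemma P_ideal (R : idomainType) (M : {poly R} -> Prop) :
  is_ideal M -> is_ideal (contraction M).
Proof.
move=> [M0 MD MM]; split; rewrite /contraction.
- by rewrite polyC0.
- by move=> x y Hx Hy; rewrite polyCD; apply: MD.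
- by move=> r x Hx; rewrite polyCM; apply: MM.
Qed.

Lemma P_prime (R : idomainType) (M : {poly R} -> Prop) a b :
  is_maximal_ideal M -> ~ contraction M a -> ~ contraction M b -> ~ contraction M (a * b).
Proof.
move=> HM Na Nb; rewrite /contraction polyCM => Hab; apply: Nb.
exact: (max_prime HM Hab Na).
Qed.

Lemma P_not1 (R : idomainType) (M : {poly R} -> Prop) :
  is_maximal_ideal M -> ~ contraction M 1.
Proof. by move=> [_ N1 _]; rewrite /contraction. Qed.

Lemma PX_in_M (R : idomainType) (M : {poly R} -> Prop) (h : {poly R}) :
  is_ideal M -> (forall i, contraction M h`_i) -> M h.
Proof.
move=> HI Hh; rewrite -(coefK h) poly_def; apply: ideal_sum => // i _.
rewrite -mul_polyC mulrC; case: HI => _ _ IM; apply: IM; exact: Hh.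
Qed.

Lemma strip (R : idomainType) (M : {poly R} -> Prop) n :
  is_ideal M ->
  (forall h, M h -> (size h < n)%N -> contraction M (lead_coef h)) ->
  forall h, M h -> (size h < n)%N -> forall i, contraction M h`_i.
Proof.
move=> HI; have HP := P_ideal HI; case: (HP) => P0 PD PM.
elim: n => [//|n IH] Hyp h Mh Hs i.
have [->|hN0] := eqVneq h 0; first by rewrite coef0.
set L := lead_coef h.
pose h' := h - L%:P * 'X^((size h).-1).
have PL : contraction M L by exact: Hyp.
have Mh' : M h'.
  apply: (ideal_sub HI) => //; case: (HI) => _ _ IM; rewrite mulrC; apply: IM; exact: PL.
have sz : (size h' <= (size h).-1)%N.
  apply/leq_sizeP => j Hj; rewrite /h' coefB coefCM coefXn.
  have [Ej|Hne] := eqVneq j (size h).-1; first by rewrite Ej mulr1 -lead_coefE subrr.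
  rewrite mulr0 subr0 nth_default //.
  have : ((size h).-1 < j)%N by rewrite ltn_neqAle eq_sym Hne Hj.
  by case: (size h) => //.
have sz0 : (0 < size h)%N by rewrite size_poly_gt0.
have Hh' : forall i, contraction M h'`_i.
  apply: (IH _ h' Mh').
  - move=> q Mq Hq; apply: Hyp => //; exact: ltnW.
  - by apply: leq_ltn_trans sz _; rewrite prednK.
have -> : h`_i = h'`_i + L * ('X^((size h).-1))`_i.
  by rewrite /h' coefB coefCM subrK.
apply: PD; [exact: Hh' | rewrite mulrC; apply: PM; exact: PL].
Qed.

Lemma exists_g (R : idomainType) (M : {poly R} -> Prop) :
  is_maximal_ideal M ->
  exists g, [/\ M g, ~ contraction M (lead_coef g), (2 <= size g)%N &
     forall h, M h -> (size h < size g)%N -> forall i, contraction M h`_i].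
Proof.
move=> HM; have [HI N1 Hmax] := HM; have HP := P_ideal HI.
have [P0 PD PM] := HP.
have Hex : exists n, exists g, [/\ M g, ~ contraction M (lead_coef g) & size g = n].
  apply: NNPP => Hno.
  have all : forall h, M h -> forall i, contraction M h`_i.
    move=> h Mh; apply: (@strip R M (size h).+1) => // q Mq _.
    apply: NNPP => Nq; apply: Hno; exists (size q), q; split => //.
  pose J := fun h : {poly R} => contraction M h`_0.
  have HJ : is_ideal J.
    split; rewrite /J.
    - by rewrite coef0.
    - by move=> x y Hx Hy; rewrite coefD; apply: PD.
    - by move=> r x Hx; rewrite coef0M; apply: PM.
  case: (Hmax J HJ (fun x Mx => all x Mx 0)) => [HJM|J1].
  + have MX : M 'X by apply/HJM; rewrite /J coefX.
    by have := all _ MX 1%N; rewrite coefX.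
  + by move: J1; rewrite /J coef1.
have Hmin : forall n, (exists g, [/\ M g, ~ contraction M (lead_coef g) & size g = n]) ->
   exists g, [/\ M g, ~ contraction M (lead_coef g) &
     forall h, M h -> (size h < size g)%N -> contraction M (lead_coef h)].
  elim/ltn_ind => n IH [g [Mg Ng Sg]].
  case: (classic (exists h, M h /\ (size h < n)%N /\ ~ contraction M (lead_coef h))).
  - move=> [h [Mh [Sh Nh]]]; apply: (IH (size h)); first by [].
    by exists h.
  - move=> Hno; exists g; split => // h Mh Sh; apply: NNPP => Nh; apply: Hno.
    by exists h; rewrite -Sg.
have [n Hn] := Hex; have [g [Mg Ng Hg]] := Hmin n Hn.
exists g; split => //; last first.
  move=> h Mh Sh; apply: (@strip R M (size g)) => //.
have gN0 : g != 0 by apply/eqP => g0; apply: Ng; rewrite g0 lead_coef0.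
rewrite ltnNge; apply/negP => Sg; apply: Ng.
rewrite lead_coefE; rewrite (size1_polyC Sg) in Mg.
move: Sg; rewrite leq_eqVlt ltnS leqn0 size_poly_eq0 (negPf gN0) orbF => /eqP ->.
exact: Mg.
Qed.

Definition W (R : idomainType) (M : {poly R} -> Prop) (g : {poly R}) k (h : {poly R}) : Prop :=
  exists s, ~ contraction M s /\ exists H e, s%:P * h = g * H + e /\
    forall i, symbolic_pow (contraction M) k e`_i.

Lemma W_ideal (R : idomainType) (M : {poly R} -> Prop) g k :
  is_maximal_ideal M -> is_ideal (W M g k).
Proof.
move=> HM; have Hpr := P_prime HM; have H1 := P_not1 HM.
have [Q0 QD QM] := SP_ideal k Hpr H1.
split.
- exists 1; split => //; exists 0, 0; split; first by rewrite mulr0 mulr0 addr0.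
  by move=> i; rewrite coef0.
- move=> x y [s [Ns [H [e [E He]]]]] [s' [Ns' [H' [e' [E' He']]]]].
  exists (s * s'); split; first exact: Hpr.
  exists (s'%:P * H + s%:P * H'), (s'%:P * e + s%:P * e'); split.
  + have -> : (s * s')%:P * (x + y) = s'%:P * (s%:P * x) + s%:P * (s'%:P * y).
      by rewrite polyCM; ring.
    rewrite E E'; ring.
  + by move=> i; rewrite coefD !coefCM; apply: QD; apply: QM.
- move=> r x [s [Ns [H [e [E He]]]]]; exists s; split => //.
  exists (r * H), (r * e); split; first by rewrite mulrCA E; ring.
  move=> i; rewrite coefM; apply: ideal_sum; first exact: SP_ideal.
  by move=> j _; apply: QM.
Qed.

Lemma W_mul (R : idomainType) (M : {poly R} -> Prop) g k h1 h2 :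
  is_maximal_ideal M -> W M g k h1 -> W M g 1 h2 -> W M g k.+1 (h1 * h2).
Proof.
move=> HM; have Hpr := P_prime HM; have H1 := P_not1 HM.
have HP := P_ideal (let: And3 h _ _ := HM in h).
move=> [s [Ns [H [e [E He]]]]] [s' [Ns' [H' [e' [E' He']]]]].
exists (s * s'); split; first exact: Hpr.
exists (H * g * H' + H * e' + e * H'), (e * e'); split.
- have -> : (s * s')%:P * (h1 * h2) = (s%:P * h1) * (s'%:P * h2) by rewrite polyCM; ring.
  rewrite E E'; ring.
- move=> i; rewrite coefM; apply: ideal_sum; first exact: SP_ideal.
  move=> j _; exact: SP_mul.
Qed.

Lemma W_M (R : idomainType) (M : {poly R} -> Prop) g h :
  is_maximal_ideal M -> M g -> ~ contraction M (lead_coef g) -> (2 <= size g)%N ->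
  (forall h, M h -> (size h < size g)%N -> forall i, contraction M h`_i) ->
  M h -> W M g 1 h.
Proof.
move=> HM Mg Ng Sg Hg Mh; have Hpr := P_prime HM; have H1 := P_not1 HM.
have HI : is_ideal M by case: HM.
have HP := P_ideal HI.
have gN0 : g != 0 by rewrite -size_poly_gt0; apply: leq_trans Sg.
have Nc : forall k, ~ contraction M (lead_coef g ^+ k).
  by elim=> [|k IH]; [rewrite expr0 | rewrite exprS; apply: Hpr].
exists (lead_coef g ^+ scalp h g); split; first exact: Nc.
exists (h %/ g), (h %% g); split.
  by rewrite mul_polyC (Pdiv.Idomain.divp_eq h g) mulrC.
move=> i; apply: SP_of_P => //; apply: (Hg (h %% g)); last by rewrite Pdiv.Idomain.ltn_modp.
have -> : h %% g = (lead_coef g ^+ scalp h g)%:P * h - (h %/ g) * g.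
  by rewrite mul_polyC (Pdiv.Idomain.divp_eq h g) addrC addKr.
case: (HI) => _ _ IM; apply: (ideal_sub HI); [apply: IM; exact: Mh | apply: IM; exact: Mg].

Qed.

Lemma W_pow (R : idomainType) (M : {poly R} -> Prop) g k h :
  is_maximal_ideal M -> M g -> ~ contraction M (lead_coef g) -> (2 <= size g)%N ->
  (forall h, M h -> (size h < size g)%N -> forall i, contraction M h`_i) ->
  ideal_pow M k h -> W M g k h.
Proof.
move=> HM Mg Ng Sg Hg; have H1 := P_not1 HM.
elim: k h => [|k IH] h.
  move=> _; exists 1; split => //; exists 0, h; split; first by rewrite mul1r mulr0 add0r.
  by move=> i; exact: SP0.
move=> [s [Hs ->]]; apply: ideal_sum; first exact: W_ideal.
move=> p /Hs [Hp1 Hp2]; apply: W_mul => //; first exact: IH.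
exact: W_M.
Qed.

Lemma lin3 (A : comNzRingType) (a S e : A) : a + S + e = 0 -> a = - e - S.
Proof. by move=> h; apply: (addIr (S + e)); rewrite addrA h; ring. Qed.

Lemma W_final (R : idomainType) (M : {poly R} -> Prop) g t x :
  is_maximal_ideal M -> ~ contraction M (lead_coef g) -> (2 <= size g)%N ->
  W M g t x%:P -> symbolic_pow (contraction M) t x.
Proof.
move=> HM Ng Sg [s [Ns [H [e [E He]]]]].
have Hpr := P_prime HM; have H1 := P_not1 HM.
have HQ := SP_ideal t Hpr H1; have [Q0 QD QM] := HQ.
set Q := symbolic_pow (contraction M) t in HQ Q0 QD QM He *.
set d := (size g).-1.
have d1 : (1 <= d)%N by rewrite /d -subn1 ltn_subRL addn0.
have gd : g`_d = lead_coef g by rewrite lead_coefE.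
have gbig : forall i, (d < i)%N -> g`_i = 0.
  move=> i Hi; apply: nth_default; rewrite -(prednK (leq_trans _ Sg)) //.
have claim : forall k j, (size H <= j + k)%N -> Q H`_j.
  elim=> [|k IH] j Hj.
    by rewrite addn0 in Hj; rewrite nth_default.
  set n := (j + d)%N.
  have coefn : (g * H)`_n + e`_n = 0.
    by rewrite -coefD -E -polyCM coefC /n addn_eq0 [d == 0%N]eqn0Ngt d1 andbF.
  have Hdn : (d < n.+1)%N by rewrite ltnS /n leq_addl.
  move: coefn; rewrite coefM (bigD1 (Ordinal Hdn)) //= gd.
  set S := \sum_(i < n.+1 | _) _ => Hsum.
  have QS : Q S.
    apply: (big_ind Q) => // i /eqP Hi.
    have : (val i != d) by apply/eqP => Hv; apply: Hi; apply: val_inj.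
    case: (ltngtP (val i) d) => // Hid _.
      apply: QM; apply: IH; apply: leq_trans Hj _; rewrite addnS -addSn leq_add2r /n.
      by rewrite -addnBA ?(ltnW Hid) // -[j.+1]addn1 leq_add2l subn_gt0.
    by rewrite gbig // mul0r.
  have : Q (lead_coef g * H`_(n - d)).
    have -> : lead_coef g * H`_(n - d) = - e`_n - S.
      exact: lin3.
    apply: (ideal_sub HQ) => //; exact: (ideal_opp HQ).
  rewrite /n addnK; exact: SP_sat.
have QH0 : Q H`_0 by apply: (claim (size H)); rewrite add0n.
have : Q (s * x).
  have := congr1 (fun p : {poly R} => p`_0) E; rewrite /= -polyCM coefC eqxx coefD coef0M => ->.
  by apply: QD; [apply: QM | apply: He].
exact: SP_sat.
Qed.

Lemma lift_pow (R : idomainType) (M : {poly R} -> Prop) t r :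
  ideal_pow (contraction M) t r -> ideal_pow M t r%:P.
Proof.
elim: t r => [//|t IH] r [s [Hs ->]].
exists [seq (p.1%:P, p.2%:P) | p <- s]; split.
- by move=> p /mapP[q /Hs [h1 h2] ->] /=; split => //; apply: IH.
- rewrite big_map raddf_sum /=; apply: eq_bigr => p _; by rewrite polyCM.
Qed.

Theorem theorem3p7 (R : idomainType) (M : {poly R} -> Prop) :
  is_maximal_ideal M ->
  (power_stable M <->
   forall t : nat, (1 <= t)%N ->
     forall x : R, symbolic_pow (contraction M) t x <-> ideal_pow (contraction M) t x).
Proof.
move=> HM; have H1 := P_not1 HM; split.
- move=> Hps t Ht x; split.
  + move=> [s [Ns Hx]]; apply/(Hps t Ht x).
    have := (proj2 (Hps t Ht (s * x)) Hx); rewrite /contraction polyCM.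
    exact: pow_primary.
  + by move=> Hx; exists 1; split => //; rewrite mul1r.
- move=> Hsym t Ht r; split.
  + move=> Hr; apply/(Hsym t Ht).
    have [g [Mg Ng Sg Hg]] := exists_g HM.
    apply: (W_final HM Ng Sg); exact: W_pow.
  + exact: lift_pow.
Qed.
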